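(* Let $\mathbf{FL}=(FL_0,FL_1,\dots)$ be any sequence of recommendations maximizing long-term engagement, let $(\mathcal U^*,\mathcal C^* )$ be any maximum stable set with recommendation $R^*$, and let $\mathbf{ALG}=(ALG_0,ALG_1,\dots)$ be the sequence with $ALG_t(i)=R^*(i)$ for all $t$ and all $i\in\mathcal U^*$ (and, at $t=0$, $ALG_0(i)$ an arbitrary subset of $\mathcal C^*$ of size $K$ for users $i\in\mathcal U_0\setminus\mathcal U^*$). Then $\mathrm{LTE}(\mathbf{FL})=\mathrm{LTE}(\mathbf{ALG})$.
   Context: An instance consists of a dimension $D$, users $\mathcal U_0=\{1,\dots,U\}$ with types $u_i\in\mathbb R^D_{\ge0}$, creators $\mathcal C_0=\{1,\dots,C\}$ with types $c_j\in\mathbb R^D_{\ge 0}$, all of Euclidean norm $1$, a positive integer $K$, a creator threshold $\bar a\in\mathbb N_0$ and a user threshold $\bar e\in[0,1]$. At time $t=0,1,\dots$ the platform has sets $\mathcal U_t,\mathcal C_t$ and chooses $R_t$ assigning each $i\in\mathcal U_t$ a set $R_t(i)\subseteq\mathcal C_t$ of size $K$ (smaller only if necessary). Engagement $E(\mathcal U,\mathcal C,R)=\sum_{i\in\mathcal U}\sum_{j\in R(i)}u_i^Tc_j$. Then $\mathcal U_{t+1}=\{i\in\mathcal U_t:|R_t(i)|=K,\ u_i^Tc_j\ge\bar e\ \forall j\in R_t(i)\}$, $\mathcal C_{t+1}=\{j\in\mathcal C_t:|\{i\in\mathcal U_t:j\in R_t(i)\}|\ge\bar a\}$. $\mathrm{LTE}(\mathbf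 R)=\lim_{T\to\infty}\frac1T\sum_{t<T}E(\mathcal U_t,\mathcal C_t,R_t)$. $(\mathcal U,\mathcal C)$ with $\mathcal U\subseteq\mathcal U_0$, $\mathcal C\subseteq\mathcal C_0$ is a stable set with recommendation $R$ if $R(i)\subseteq\mathcal C$, $|R(i)|=K$ and $u_i^Tc_j\ge\bar e$ for all $i\in\mathcal U$, $j\in R(i)$, and $|\{i\in\mathcal U:j\in R(i)\}|\ge\bar a$ for all $j\in\mathcal C$; a maximum stable set maximizes $E(\mathcal U,\mathcal C,R)$ among all stable sets with recommendations. *)

(* Defs.v *)
From HB Require Import structures.
From mathcomp Require Import all_boot all_order all_algebra.
From mathcomp Require Import all_classical all_reals all_analysis.
Set Implicit Arguments. Unset Strict Implicit. Unset Printing Implicit Defensive.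
Import Order.TTheory GRing.Theory Num.Theory numFieldNormedType.Exports.
Local Open Scope ring_scope.

Section Model.
Variables (R : realType) (D U C : nat).
Variables (u : 'I_U -> 'I_D -> R) (c : 'I_C -> 'I_D -> R).
Variables (K abar : nat) (ebar : R).

Definition dot (x y : 'I_D -> R) : R := \sum_(k < D) x k * y k.

Definition enorm (x : 'I_D -> R) : R := Num.sqrt (\sum_(k < D) x k ^+ 2).

(* A recommendation: assigns each user a set of creators (only values on the
   current user set matter). *)
Definition recommendation := 'I_U -> {set 'I_C}.

Definition engagement (Us : {set 'I_U}) (rec : recommendation) : R :=
  \sum_(i in Us) \sum_(j in rec i) dot (u i) (c j).

Definition step (st : {set 'I_U} * {set 'I_C}) (rec : recommendation)
  : {set 'I_U} * {set 'I_C} :=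
  ([set i in st.1 | (#|rec i| == K) && [forall j in rec i, ebar <= dot (u i) (c j)]],
   [set j in st.2 | abar <= #|[set i in st.1 | j \in rec i]| ]%N).

Fixpoint states (Rs : nat -> recommendation) (t : nat) : {set 'I_U} * {set 'I_C} :=
  match t with
  | 0 => ([set: 'I_U], [set: 'I_C])
  | t'.+1 => step (states Rs t') (Rs t')
  end.

(* Rs is a legal sequence of recommendations: R_t(i) is a subset of C_t of
   size K, smaller only if necessary, i.e. of size min(K, |C_t|). *)
Definition valid_seq (Rs : nat -> recommendation) : Prop :=
  forall t i, i \in (states Rs t).1 ->
    Rs t i \subset (states Rs t).2 /\ #|Rs t i| = minn K #|(states Rs t).2|.

Definition eng_at (Rs : nat -> recommendation) (t : nat) : R :=
  engagement (states Rs t).1 (Rs t).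

Definition avg_eng (Rs : nat -> recommendation) (T : nat) : R :=
  (T%:R)^-1 * \sum_(t < T) eng_at Rs t.

Definition has_LTE (Rs : nat -> recommendation) (l : R) : Prop :=
  (avg_eng Rs @ \oo --> l)%classic.

Definition LTE_maximizer (Rs : nat -> recommendation) : Prop :=
  valid_seq Rs /\
  exists l, has_LTE Rs l /\
    forall Rs' l', valid_seq Rs' -> has_LTE Rs' l' -> l' <= l.

Definition stable (Us : {set 'I_U}) (Cs : {set 'I_C}) (rec : recommendation) : Prop :=
  (forall i, i \in Us ->
     rec i \subset Cs /\ #|rec i| = K /\
     (forall j, j \in rec i -> ebar <= dot (u i) (c j))) /\
  (forall j, j \in Cs -> (abar <= #|[set i in Us | j \in rec i]|)%N).

Definition max_stable (Us : {set 'I_U}) (Cs : {set 'I_C}) (rec : recommendation) : Prop :=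
  stable Us Cs rec /\
  forall Us' Cs' rec', stable Us' Cs' rec' -> engagement Us' rec' <= engagement Us rec.

End Model.

(* Main.v *)
Require Import Defs.
From HB Require Import structures.
From mathcomp Require Import all_boot all_order all_algebra.
From mathcomp Require Import all_classical all_reals all_analysis.
From mathcomp Require Import lra zify.
Import Order.TTheory GRing.Theory Num.Theory numFieldNormedType.Exports.
Local Open Scope classical_set_scope.
Local Open Scope ring_scope.

Lemma inv_nat_cvg0 (R : realType) : ((fun n : nat => (n%:R : R)^-1) @ \oo --> (0:R))%classic.
Proof.
rewrite -(cvg_shiftn 1).
have -> : [sequence (((n + 1)%N)%:R : R)^-1]_n = harmonic.
  by apply/funext => n /=; rewrite addn1.
exact: cvg_harmonic.
Qed.

Lemma cesaro_aux (R : realType) (a : nat -> R) (E : R) (T n : nat) :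
  (T < n)%N ->
  (n%:R)^-1 * \sum_(t < n) a t =
  E + (n%:R)^-1 * \sum_(t < T) (a t - E) + (n%:R)^-1 * \sum_(T <= t < n) (a t - E).
Proof.
move=> lt.
have n0 : (n%:R : R) != 0 by rewrite pnatr_eq0; lia.
rewrite -addrA -mulrDr.
have -> : \sum_(t < T) (a t - E) + \sum_(T <= t < n) (a t - E) = \sum_(t < n) (a t - E).
  rewrite -!(big_mkord xpredT (fun t => a t - E)).
  by rewrite -big_cat_nat //; lia.
rewrite sumrB sumr_const card_ord mulrDr mulrN.
rewrite -[E *+ n]mulr_natr mulrCA mulVf // mulr1.
by rewrite addrC subrK.
Qed.

Lemma cesaro_le (R : realType) (a : nat -> R) (E l : R) (T : nat) :
  (forall t, (T <= t)%N -> a t <= E) ->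
  ((fun n : nat => (n%:R)^-1 * \sum_(t < n) a t) @ \oo --> l)%classic -> l <= E.
Proof.
move=> hle hl.
set M := \sum_(t < T) (a t - E).
have hg : ((fun n : nat => E + (n%:R)^-1 * M) @ \oo --> E)%classic.
  rewrite -[X in _ --> X]addr0.
  apply: cvgD; first exact: cvg_cst.
  rewrite -(mul0r M).
  exact: cvgMr_tmp (inv_nat_cvg0 R).
apply: (ler_cvg_to hl hg).
near=> n.
rewrite (@cesaro_aux _ _ E T n); last by near: n; apply: nbhs_infty_gt.
rewrite -/M gerDl.
apply: mulr_ge0_le0; first by rewrite invr_ge0.
rewrite big_nat_cond; apply: sumr_le0 => i /andP[/andP[hi _] _].
by rewrite subr_le0 hle.
Unshelve. all: end_near.
Qed.

Lemma cesaro_eq (R : realType) (a : nat -> R) (E : R) (T : nat) :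
  (forall t, (T <= t)%N -> a t = E) ->
  ((fun n : nat => (n%:R)^-1 * \sum_(t < n) a t) @ \oo --> E)%classic.
Proof.
move=> heq.
set M := \sum_(t < T) (a t - E).
have hg : ((fun n : nat => E + (n%:R)^-1 * M) @ \oo --> E)%classic.
  rewrite -[X in _ --> X]addr0.
  apply: cvgD; first exact: cvg_cst.
  rewrite -(mul0r M).
  exact: cvgMr_tmp (inv_nat_cvg0 R).
apply: cvg_trans hg.
apply: near_eq_cvg.
near=> n.
rewrite (@cesaro_aux _ _ E T n); last by near: n; apply: nbhs_infty_gt.
rewrite -/M big_nat_cond big1 ?mulr0 ?addr0 //.
by move=> i /andP[/andP[hi _] _]; rewrite heq // subrr.
Unshelve. all: end_near.
Qed.
Lemma states_mono (R : realType) (D U C : nat)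
  (u : 'I_U -> 'I_D -> R) (c : 'I_C -> 'I_D -> R) (K abar : nat) (ebar : R)
  (Rs : nat -> recommendation U C) (m n : nat) : (m <= n)%N ->
  (states u c K abar ebar Rs n).1 \subset (states u c K abar ebar Rs m).1 /\
  (states u c K abar ebar Rs n).2 \subset (states u c K abar ebar Rs m).2.
Proof.
elim: n => [|n IH].
  by rewrite leqn0 => /eqP ->; rewrite !subxx.
rewrite leq_eqVlt => /orP[/eqP -> | ]; first by rewrite !subxx.
rewrite ltnS => /IH [h1 h2]; split.
- apply: (fintype.subset_trans _ h1); apply/fintype.subsetP => x /=; rewrite inE => /andP[] //.
- apply: (fintype.subset_trans _ h2); apply/fintype.subsetP => x /=; rewrite inE => /andP[] //.
Qed.

Lemma states_stab (R : realType) (D U C : nat)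
  (u : 'I_U -> 'I_D -> R) (c : 'I_C -> 'I_D -> R) (K abar : nat) (ebar : R)
  (Rs : nat -> recommendation U C) :
  exists T, forall t, (T <= t)%N -> states u c K abar ebar Rs t = states u c K abar ebar Rs T.
Proof.
set st := states u c K abar ebar Rs.
pose f t := (#|(st t).1| + #|(st t).2|)%N.
have fmono : forall m n, (m <= n)%N -> (f n <= f m)%N.
  move=> m n /(@states_mono _ _ _ _ u c K abar ebar Rs _ _) [h1 h2].
  by rewrite /f leq_add // subset_leq_card.
suff : forall b t0, (f t0 <= b)%N -> exists T, forall t, (T <= t)%N -> f t = f T.
  case/(_ (f 0%N) 0%N (leqnn _)) => T hT; exists T => t hTt.
  have [h1 h2] := @states_mono _ _ _ _ u c K abar ebar Rs _ _ hTt.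
  have := hT t hTt; rewrite /f => e.
  have c1 := subset_leq_card h1; have c2 := subset_leq_card h2.
  move: c1 c2 e; rewrite /f /st => c1 c2 e.
  have e1 : (#|(st T).1| <= #|(st t).1|)%N by rewrite /st; lia.
  have e2 : (#|(st T).2| <= #|(st t).2|)%N by rewrite /st; lia.
  have E1 : (st t).1 = (st T).1 by apply/eqP; rewrite eqEcard h1 e1.
  have E2 : (st t).2 = (st T).2 by apply/eqP; rewrite eqEcard h2 e2.
  move: E1 E2; rewrite /st.
  case: (states _ _ _ _ _ _ t) => a b; case: (states _ _ _ _ _ _ T) => a' b' /= -> -> //.
elim=> [|b IH] t0 hb.
  exists t0 => t ht; have := fmono _ _ ht; lia.
case: (boolp.pselect (exists t, (t0 <= t)%N /\ (f t < f t0)%N)) => [[t [ht hlt]]|hn].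
  have [T hT] := IH t (ltac:(lia)).
  by exists T.
exists t0 => t ht; apply/eqP; rewrite eqn_leq fmono //= leqNgt.
by apply/negP => hlt; apply: hn; exists t.
Qed.

Lemma eventually_upper (R : realType) (D U C : nat)
  (u : 'I_U -> 'I_D -> R) (c : 'I_C -> 'I_D -> R) (K abar : nat) (ebar : R)
  (Rs : nat -> recommendation U C) Us Cs rec :
  valid_seq u c K abar ebar Rs -> max_stable u c K abar ebar Us Cs rec ->
  exists T, forall t, (T <= t)%N -> eng_at u c K abar ebar Rs t <= engagement u c Us rec.
Proof.
move=> hv [_ hmax].
have [T hT] := @states_stab _ _ _ _ u c K abar ebar Rs.
exists T => t ht.
have e1 := hT t ht.
have e2 := hT t.+1 (leqW ht).
rewrite /eng_at e1.
apply: (hmax _ (states u c K abar ebar Rs T).2); split.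
- move=> i hi.
  have [hsub hcard] := hv t i (ltac:(by rewrite e1)).
  have : i \in (states u c K abar ebar Rs t.+1).1 by rewrite e2.
  rewrite /= inE => /andP[_ /andP[/eqP hK /forall_inP hf]].
  split; first by rewrite -e1.
  by split.
- move=> j hj.
  have : j \in (states u c K abar ebar Rs t.+1).2 by rewrite e2.
  by rewrite /= inE e1 => /andP[].
Qed.

Lemma dot_ge0 (R : realType) (D : nat) (x y : 'I_D -> R) :
  (forall k, 0 <= x k) -> (forall k, 0 <= y k) -> 0 <= dot x y.
Proof. by move=> hx hy; rewrite /dot; apply: sumr_ge0 => k _; apply: mulr_ge0. Qed.

Theorem proposition1 (R : realType) (D U C : nat)
  (u : 'I_U -> 'I_D -> R) (c : 'I_C -> 'I_D -> R)
  (K abar : nat) (ebar : R)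
  (hu_nonneg : forall i k, 0 <= u i k) (hc_nonneg : forall j k, 0 <= c j k)
  (hu_norm : forall i, enorm (u i) = 1) (hc_norm : forall j, enorm (c j) = 1)
  (hK : (0 < K)%N) (he0 : 0 <= ebar) (he1 : ebar <= 1)
  (FL : nat -> recommendation U C)
  (hFL : LTE_maximizer u c K abar ebar FL)
  (Ustar : {set 'I_U}) (Cstar : {set 'I_C}) (Rstar : recommendation U C)
  (hstar : max_stable u c K abar ebar Ustar Cstar Rstar)
  (ALG : nat -> recommendation U C)
  (hALG_valid : valid_seq u c K abar ebar ALG)
  (hALG_star : forall t i, i \in Ustar -> ALG t i = Rstar i)
  (hALG_0 : forall i, i \notin Ustar -> ALG 0%N i \subset Cstar /\ #|ALG 0%N i| = K) :
  forall l, has_LTE u c K abar ebar FL l -> has_LTE u c K abar ebar ALG l.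
Proof.
move=> l hl.
set E := engagement u c Ustar Rstar.
have hsubU : forall t, Ustar \subset (states u c K abar ebar ALG t).1.
  elim=> [|t IH]; first exact: finset.subsetT.
  apply/fintype.subsetP => i hi.
  have [[/(_ i hi) [_ [hc hd]] _] _] := hstar.
  rewrite /= inE (fintype.subsetP IH i hi) /= hALG_star // hc eqxx /=.
  by apply/forall_inP.
have hlow : forall t, E <= eng_at u c K abar ebar ALG t.
  move=> t; rewrite /eng_at /engagement /E.
  rewrite (big_setID Ustar) /=.
  have -> : (states u c K abar ebar ALG t).1 :&: Ustar = Ustar.
    by apply/finset.setIidPr.
  rewrite -[X in X <= _]addr0 lerD //.
    by apply: ler_sum => i hi; rewrite hALG_star.
  apply: sumr_ge0 => i _; apply: sumr_ge0 => j _; exact: dot_ge0.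
have [T1 hT1] := @eventually_upper _ _ _ _ u c K abar ebar _ _ _ _ hALG_valid hstar.
have hALG : has_LTE u c K abar ebar ALG E.
  apply: (@cesaro_eq _ _ E T1) => t ht.
  by apply/eqP; rewrite eq_le hT1 // hlow.
case: hFL => hFLv [l0 [hl0 hmax]].
have ll0 : l = l0 by apply: (cvg_unique _ hl hl0).
have hEl0 : E <= l0 := hmax _ _ hALG_valid hALG.
have [T2 hT2] := @eventually_upper _ _ _ _ u c K abar ebar _ _ _ _ hFLv hstar.
have hlE : l <= E := @cesaro_le _ _ _ _ _ hT2 hl.
have -> : l = E by apply/eqP; rewrite eq_le hlE ll0 hEl0.
exact: hALG.
Qed.
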